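(* Let $\mathcal G=(V,E,r)$ be a non-null graph, let $m$ be the maximal order (number of vertices) of a connected component of $\mathcal G$, and let $D$ be the maximal vertex degree of $\mathcal G$. (1) For every real $r>D/2$, the function $\sigma_r\colon\mathbf A(\mathcal G)\to\mathbb R_{\ge0}$, $\sigma_r(a)=r\sum_{v\in V}a(v)-\sum_{e\in E}a(e)$, is a semi-length function. (2) $\rho(\mathbf A(\mathcal G))\le m-\frac{m-1}{D}$. (3) If $\mathcal G$ is simple, then $\rho(\mathbf A(\mathcal G))\le m-2+\frac{2}{m}$.
   Context: A graph $\mathcal G=(V,E,r)$ consists of a finite vertex set $V$, a finite edge set $E$ disjoint from $V$, and a map $r$ assigning to each edge a two-element subset of $V$; multiple edges allowed, no loops; simple means no two edges have the same pair of incident vertices. An agglomeration on $\mathcal G$ is a function $a\colon V\cup E\to\mathbb N_0$ with $a(v)\ge a(e)$ whenever $v$ is incident with $e$; $\mathbf A(\mathcal G)$ is the monoid of agglomerations under pointwise addition. A semi-length function is a monoid homomorphism $\sigma\colon\mathbf A(\mathcal G)\to(\mathbb R_{\ge0},+)$ with $\sigma(a)=0$ iff $a=0$. For a reduced atomic monoid $H$, $\mathsf L(a)$ is the set of $k$ such that $a$ is a sum of $k$ atoms, $\rho(a)=\sup\mathsf L(a)/\min\mathsf L(a)$ for $a\ne0$, $\rho(0)=1$, and $\rho(H)=\sup_{a\in H}\rho(a)$. *)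

(* Defs.v *)
From HB Require Import structures.
From mathcomp Require Import all_boot all_order all_algebra.
From mathcomp Require Import all_classical all_reals ereal.
Set Implicit Arguments. Unset Strict Implicit. Unset Printing Implicit Defensive.
Import Order.TTheory GRing.Theory Num.Theory.
Local Open Scope classical_set_scope.
Local Open Scope ring_scope.

(* A graph G = (V, E, r): finite vertex type V, finite edge type E, and
   r e = the (ordered representation of the) two-element set of endpoints
   of e; no loops: the two endpoints are distinct.  Multiple edges allowed. *)

Section Graph.
Variables (V E : finType) (ends : E -> V * V).

Definition incident (v : V) (e : E) : bool :=
  (v == (ends e).1) || (v == (ends e).2).

Definition simple_graph : Prop :=
  injective (fun e => [set (ends e).1; (ends e).2]).

Definition degree (v : V) : nat := #|[set e | incident v e]|.

Definition max_degree : nat := (\max_(v : V) degree v)%N.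

Definition adj : rel V :=
  fun u w => [exists e, incident u e && incident w e && (u != w)].

Definition component (v : V) : {set V} := [set u | connect adj v u].

Definition max_comp_order : nat := (\max_(v : V) #|component v|)%N.

Definition agglo (a : V + E -> nat) : Prop :=
  forall v e, incident v e -> (a (inr e) <= a (inl v))%N.

Definition azero : V + E -> nat := fun _ => 0%N.
Definition aadd (a b : V + E -> nat) : V + E -> nat := fun x => (a x + b x)%N.

Definition is_atom (a : V + E -> nat) : Prop :=
  agglo a /\ a <> azero /\
  forall b c, agglo b -> agglo c -> a = aadd b c -> b = azero \/ c = azero.

Definition lengths (a : V + E -> nat) : set nat :=
  [set k | exists s : seq (V + E -> nat),
      size s = k /\ (forall i, (i < size s)%N -> is_atom (nth azero s i)) /\
      a = foldr aadd azero s].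

Definition min_length (a : V + E -> nat) : nat :=
  xget 0%N [set k | lengths a k /\ forall j, lengths a j -> (k <= j)%N].

Definition semi_length (R : realType) (sigma : (V + E -> nat) -> R) : Prop :=
  (forall a, agglo a -> 0 <= sigma a) /\
  sigma azero = 0 /\
  (forall a b, agglo a -> agglo b -> sigma (aadd a b) = sigma a + sigma b) /\
  (forall a, agglo a -> (sigma a = 0 <-> a = azero)).

Definition sigma_r (R : realType) (r : R) (a : V + E -> nat) : R :=
  r * \sum_(v : V) (a (inl v))%:R - \sum_(e : E) (a (inr e))%:R.

Definition rho_elt (R : realType) (a : V + E -> nat) : \bar R :=
  if `[< a = azero >] then 1%E
  else (ereal_sup [set (k%:R)%:E | k in lengths a] *
        ((min_length a)%:R^-1)%:E)%E.

Definition rho_monoid (R : realType) : \bar R :=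
  ereal_sup [set rho_elt R a | a in agglo].

End Graph.

(* Main.v *)
Require Import Defs.
From HB Require Import structures.
From mathcomp Require Import all_boot all_order all_algebra.
From mathcomp Require Import all_classical all_reals ereal.
From mathcomp Require Import ring lra zify.
Import Order.TTheory GRing.Theory Num.Theory.
Local Open Scope ring_scope.

Lemma bin2_twice n : (2 * 'C(n, 2) = n * n.-1)%N.
Proof.
elim: n => [|n IH] //=.
rewrite binS bin1 mulnDr IH; case: n {IH} => [|n] //=; lia.
Qed.

Section Helpers.
Variables (R : realType) (V E : finType) (ends : E -> V * V).
Hypothesis noloop : forall e, (ends e).1 != (ends e).2.

Lemma inc1 e : incident ends (ends e).1 e.
Proof. by rewrite /incident eqxx. Qed.
Lemma inc2 e : incident ends (ends e).2 e.
Proof. by rewrite /incident eqxx orbT. Qed.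

Lemma sigma_add (r : R) a b :
  @sigma_r V E R r (aadd a b) = sigma_r r a + sigma_r r b.
Proof.
rewrite /sigma_r /aadd.
under eq_bigr do rewrite natrD.
under [X in _ - X]eq_bigr do rewrite natrD.
rewrite !big_split /=; ring.
Qed.

Lemma sigma0 (r : R) : sigma_r r (@azero V E) = 0.
Proof. by rewrite /sigma_r /azero !big1 ?mulr0 ?subr0. Qed.

Lemma foldr_bounds (r lo hi : R) (s : seq (V + E -> nat)) :
  (forall u, is_atom ends u -> lo <= sigma_r r u <= hi) ->
  (forall i, (i < size s)%N -> is_atom ends (nth (@azero V E) s i)) ->
  (size s)%:R * lo <= sigma_r r (foldr (@aadd V E) (@azero V E) s) <= (size s)%:R * hi.
Proof.
move=> Hb; elim: s => [|x s IH] Hs /=.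
  by rewrite sigma0 !mul0r lexx.
have /Hb/andP [H1 H2] := Hs 0%N erefl.
have /andP [H3 H4] := IH (fun i (Hi : (i < size s)%N) => Hs i.+1 Hi).
rewrite sigma_add -addn1 natrD !mulrDl !mul1r.
apply/andP; split; lra.
Qed.

Lemma atom_label u (T : eqType) (c : V -> T) :
  is_atom ends u ->
  (forall e, u (inr e) != 0%N -> c (ends e).1 = c (ends e).2) ->
  forall v w, u (inl v) != 0%N -> u (inl w) != 0%N -> c v = c w.
Proof.
move=> [Hag [Hnz Hind]] Hc v0 w Hv Hw.
apply/eqP; apply: contraT => Hneq.
pose b := fun x : V + E => match x with
  | inl v => if c v == c v0 then u (inl v) else 0%N
  | inr e => if c (ends e).1 == c v0 then u (inr e) else 0%N end.
pose d := fun x : V + E => match x with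
  | inl v => if c v == c v0 then 0%N else u (inl v)
  | inr e => if c (ends e).1 == c v0 then 0%N else u (inr e) end.
have key : forall v e, incident ends v e -> u (inr e) != 0%N -> c v = c (ends e).1.
  move=> v e Hve He; move: Hve; rewrite /incident => /orP [/eqP->|/eqP->] //.
  by rewrite (Hc e He).
have Hb : agglo ends b.
  move=> v e Hve /=; case He: (u (inr e) == 0%N).
    by rewrite (eqP He); case: ifP.
  rewrite (key v e Hve (negbT He)); case: ifP => _ //; exact: Hag.
have Hd : agglo ends d.
  move=> v e Hve /=; case He: (u (inr e) == 0%N).
    by rewrite (eqP He); case: ifP.
  rewrite (key v e Hve (negbT He)); case: ifP => _ //; exact: Hag.
have Hu : u = aadd b d.
  apply: funext => -[v|e]; rewrite /aadd /=; case: ifP => _; by rewrite ?addn0.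
case: (Hind b d Hb Hd Hu) => H.
  have := congr1 (fun f => f (inl v0)) H; rewrite /= eqxx /azero => H0.
  by rewrite H0 in Hv.
have := congr1 (fun f => f (inl w)) H; rewrite /= eq_sym (negbTE Hneq) /azero => H0.
by rewrite H0 in Hw.
Qed.

Lemma atom_le1 u : is_atom ends u -> forall x, (u x <= 1)%N.
Proof.
move=> [Hag [Hnz Hind]] x; rewrite leqNgt; apply/negP => Hx.
pose b := fun y => minn (u y) 1.
pose d := fun y => (u y - 1)%N.
have Hb : agglo ends b by move=> v e /Hag; rewrite /b; lia.
have Hd : agglo ends d by move=> v e /Hag; rewrite /d; lia.
have Hu : u = aadd b d by apply: funext => y; rewrite /aadd /b /d; lia.
case: (Hind b d Hb Hd Hu) => H; have := congr1 (fun f => f x) H;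
  rewrite /b /d /azero; lia.
Qed.

Lemma atom_nonempty u : is_atom ends u -> exists v, u (inl v) != 0%N.
Proof.
move=> [Hag [Hnz _]].
case: (pickP (fun v => u (inl v) != 0%N)) => [v Hv|H]; first by exists v.
exfalso; apply: Hnz; apply: funext => -[v|e]; rewrite /azero.
  by have := H v => /negbFE/eqP.
have := Hag _ e (inc1 e); have := H (ends e).1 => /negbFE/eqP ->; lia.
Qed.

Lemma relabel (W : {set V}) (s : seq E) : exists c : V -> V,
  (forall e, e \in s -> c (ends e).1 = c (ends e).2) /\
  (#|W| <= #|[set c x | x in W]| + size s)%N.
Proof.
elim: s => [|e s [c [Hc Hcard]]].
  by exists id; split => //; rewrite card_imset ?addn0.
pose c' := fun v => if c v == c (ends e).2 then c (ends e).1 else c v.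
exists c'; split.
  move=> f; rewrite in_cons => /orP [/eqP->|Hf].
    by rewrite /c' eqxx; case: ifP.
  by rewrite /c' (Hc f Hf).
have Hsub : [set c x | x in W] \subset c (ends e).2 |: [set c' x | x in W].
  apply/fintype.subsetP => y /imsetP [v Hv ->]; rewrite in_setU1.
  case: eqP => [//|Hne]; apply/orP; right; apply/imsetP; exists v => //.
  by rewrite /c'; case: eqP.
have := subset_leq_card Hsub; rewrite cardsU1 /=.
case: (_ \notin _) => /=; lia.
Qed.

Definition Wset (u : V + E -> nat) := [set v | u (inl v) != 0%N].
Definition Fset (u : V + E -> nat) := [set e | u (inr e) != 0%N].

Lemma atom_edges u : is_atom ends u -> (#|Wset u| <= #|Fset u| + 1)%N.
Proof.
move=> Hu; have [c [Hc Hcard]] := relabel (Wset u) (enum (Fset u)).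
have Hl := atom_label u _ c Hu (fun e He => Hc e ltac:(by rewrite mem_enum inE)).
have [v0 Hv0] := atom_nonempty u Hu.
have Hs : [set c x | x in Wset u] \subset [set c v0].
  apply/fintype.subsetP => y /imsetP [v Hv ->]; rewrite inE in Hv.
  by rewrite inE (Hl v v0 Hv Hv0).
have := subset_leq_card Hs; rewrite cards1 => H1; rewrite -cardE in Hcard; lia.
Qed.

Lemma atom_comp u : is_atom ends u -> (#|Wset u| <= max_comp_order ends)%N.
Proof.
move=> Hu; have [v0 Hv0] := atom_nonempty u Hu.
have Hadj : forall e, adj ends (ends e).1 (ends e).2 && adj ends (ends e).2 (ends e).1.
  move=> e; apply/andP; split; apply/existsP; exists e;
    by rewrite inc1 inc2 ?noloop // eq_sym noloop.
have Hc : forall e, u (inr e) != 0%N ->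
    connect (adj ends) v0 (ends e).1 = connect (adj ends) v0 (ends e).2.
  move=> e _; have /andP [H1 H2] := Hadj e.
  by apply/idP/idP => H; apply: connect_trans H (connect1 _).
have Hl := atom_label u _ (fun v => connect (adj ends) v0 v) Hu Hc.
have Hs : Wset u \subset component ends v0.
  apply/fintype.subsetP => v; rewrite !inE => Hv.
  by rewrite -(Hl v0 v Hv0 Hv) connect0.
apply: leq_trans (subset_leq_card Hs) _.
rewrite /max_comp_order. have := @leq_bigmax V (fun v => #|component ends v|) v0. exact.
Qed.

Lemma handshake a : agglo ends a ->
  (2 * \sum_(e : E) a (inr e) <= max_degree ends * \sum_(v : V) a (inl v))%N.
Proof.
move=> Hag.
have step1 : forall e, (2 * a (inr e) <= \sum_(v : V) incident ends v e * a (inl v))%N.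
  move=> e; rewrite (bigD1 (ends e).1) //= (bigD1 (ends e).2) /=;
    last by rewrite eq_sym noloop.
  rewrite inc1 inc2 !mul1n.
  have := Hag _ _ (inc1 e); have := Hag _ _ (inc2 e); lia.
rewrite big_distrr /=.
apply: (@leq_trans (\sum_(e : E) \sum_(v : V) incident ends v e * a (inl v))%N).
  by apply: leq_sum => e _; exact: step1.
rewrite exchange_big /= big_distrr /=; apply: leq_sum => v _.
rewrite -big_distrl /=; apply: leq_mul => //.
have -> : (\sum_(i : E) incident ends v i)%N = degree ends v.
  rewrite /degree -sum1_card [RHS]big_mkcond /=; apply: eq_bigr => e _.
  case: (boolP (incident ends v e)) => H; [by rewrite mem_set | by rewrite memNset //; apply/negP].
rewrite /max_degree; exact: (@leq_bigmax V (fun v => degree ends v) v).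
Qed.

Lemma sum_01 (T : finType) (f : T -> nat) : (forall x, f x <= 1)%N ->
  \sum_x (f x)%:R = #|[set x | f x != 0%N]|%:R :> R.
Proof.
move=> Hf; rewrite -natr_sum; congr (_%:R).
rewrite -sum1_card [RHS]big_mkcond /=; apply: eq_bigr => x _.
rewrite inE; have := Hf x; case: (f x) => [|[|]] //.
Qed.

Lemma sigma_atom (r : R) u : is_atom ends u ->
  sigma_r r u = r * #|Wset u|%:R - #|Fset u|%:R.
Proof.
move=> Hu; have H1 := atom_le1 u Hu.
rewrite /sigma_r (sum_01 _ (fun v => u (inl v))) // (sum_01 _ (fun e => u (inr e))) //.
Qed.

Lemma atom_handshake u : is_atom ends u ->
  (2 * #|Fset u| <= max_degree ends * #|Wset u|)%N.
Proof.
move=> Hu; have H1 := atom_le1 u Hu.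
have := handshake u (proj1 Hu).
have Hs : forall (T : finType) (f : T -> nat), (forall x, f x <= 1)%N ->
    (\sum_x f x = #|[set x | f x != 0%N]|)%N.
  move=> T f Hf; rewrite -sum1_card [RHS]big_mkcond /=; apply: eq_bigr => x _.
  rewrite inE; have := Hf x; case: (f x) => [|[|]] //.
rewrite (Hs _ (fun v => u (inl v))) // (Hs _ (fun e => u (inr e))) //.
Qed.

Lemma atom_edge_ends u e : is_atom ends u -> e \in Fset u ->
  ((ends e).1 \in Wset u) && ((ends e).2 \in Wset u).
Proof.
move=> [Hag _]; rewrite !inE => He.
have := Hag _ _ (inc1 e); have := Hag _ _ (inc2 e).
move: He; lia.
Qed.

Lemma atom_W1 u : is_atom ends u -> (#|Wset u| <= 1)%N -> #|Fset u| = 0%N.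
Proof.
move=> Hu HW; case: (set_0Vmem (Fset u)) => [->|[e He]]; first by rewrite cards0.
exfalso; have /andP [H1 H2] := atom_edge_ends u e Hu He.
have : [set (ends e).1; (ends e).2] \subset Wset u.
  by apply/fintype.subsetP => x /set2P [->|->].
move/subset_leq_card; rewrite cards2 noloop; lia.
Qed.

Lemma simple_edges u : simple_graph ends -> is_atom ends u ->
  (2 * #|Fset u| <= #|Wset u| * (#|Wset u|).-1)%N.
Proof.
move=> Hs Hu; rewrite -bin2_twice leq_mul2l /=.
have Hinj : injective (fun e => [set (ends e).1; (ends e).2] : {set V}).
  move=> e f Hef; apply: Hs; apply/seteqP; split => x /= Hx.
    have : x \in [set (ends e).1; (ends e).2] by case: Hx => ->; rewrite !inE eqxx ?orbT.
    by rewrite Hef => /set2P [->|->]; [left | right].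
  have : x \in [set (ends f).1; (ends f).2] by case: Hx => ->; rewrite !inE eqxx ?orbT.
  by rewrite -Hef => /set2P [->|->]; [left | right].
rewrite -cards_draws -(card_imset (Fset u) Hinj).
apply: subset_leq_card; apply/fintype.subsetP => A /imsetP [e He ->].
have /andP [H1 H2] := atom_edge_ends u e Hu He.
rewrite inE cards2 noloop andbT.
by apply/fintype.subsetP => x /set2P [->|->].
Qed.

End Helpers.
Arguments Wset {V E}. Arguments Fset {V E}.
Arguments atom_nonempty {V E ends u}.
Arguments atom_comp {V E ends} noloop {u}.
Arguments atom_edges {V E ends u}.
Arguments atom_handshake {V E ends} noloop {u}.
Arguments atom_W1 {V E ends} noloop {u}.
Arguments handshake {V E ends} noloop {a}.
Arguments simple_edges {V E ends} noloop {u}.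
Arguments sigma_atom {R V E ends} r {u}.
Arguments inc1 {V E ends}.

Lemma rho_le (R : realType) (V E : finType) (ends : E -> V * V) (r lo hi : R) :
  0 < lo -> lo <= hi ->
  (forall u, is_atom ends u -> lo <= sigma_r r u <= hi) ->
  (rho_monoid ends R <= (hi / lo)%:E)%E.
Proof.
move=> Hlo Hlh Hb; apply: ge_ereal_sup => _ [a Ha <-].
rewrite /rho_elt; case: asboolP => [_|Hne].
  by rewrite lee_fin ler_pdivlMr // mul1r.
have Hq : 0 <= hi / lo by rewrite divr_ge0 // ltW // (lt_le_trans Hlo).
case: (pselect (exists k, lengths ends a k)) => [Hex|Hnex]; last first.
  have -> : min_length ends a = 0%N.
    rewrite /min_length; apply: xgetPN => k [Hk _]; apply: Hnex; by exists k.
  by rewrite invr0 mule0 lee_fin.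
have exP : exists n, `[< lengths ends a n >].
  by case: Hex => k Hk; exists k; apply/asboolP.
case: (ex_minnP exP) => k1 /asboolP Hk1 Hmin1.
have HP : exists k, mkset (fun k => lengths ends a k /\ forall j, lengths ends a j -> (k <= j)%N) k.
  exists k1; split => // j Hj; apply: Hmin1; exact/asboolP.
have [Hk0 Hmin] : lengths ends a (min_length ends a) /\
    forall j, lengths ends a j -> (min_length ends a <= j)%N := xgetPex 0%N HP.
set k0 := min_length ends a in Hk0 Hmin *.
case: Hk0 => s [Hs [Hat Ha0]].
have Hk0pos : (0 < k0)%N.
  rewrite -Hs; case: s Hs Hat Ha0 => [|x s] //= _ _ Ha0; by exfalso; apply: Hne.
have /andP [_ Hup] := @foldr_bounds R V E ends r lo hi _ Hb Hat.
rewrite -Ha0 Hs in Hup.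
have Hsup : (ereal_sup [set (k%:R)%:E | k in lengths ends a] <= (k0%:R * hi / lo)%:E)%E.
  apply: ge_ereal_sup => _ [k [t [Ht [Hatt Hat0]]] <-].
  have /andP [Hlow _] := @foldr_bounds R V E ends r lo hi _ Hb Hatt.
  rewrite -Hat0 Ht in Hlow.
  rewrite lee_fin ler_pdivlMr //; exact: le_trans Hlow Hup.
have Hk0R : 0 < (k0%:R : R) by rewrite ltr0n.
apply: le_trans (lee_wpmul2r _ Hsup) _.
  by rewrite lee_fin invr_ge0 ltW.
rewrite -EFinM lee_fin le_eqVlt; apply/orP; left; apply/eqP.
field; apply/andP; split; rewrite ?lt0r_neq0 //.
Qed.

Lemma prod_ge0 {R : realType} {x y a b : R} : a <= x -> b <= y -> 0 <= (x - a) * (y - b).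
Proof. by move=> ? ?; apply: mulr_ge0; rewrite subr_ge0. Qed.

Theorem theorem4p13 (R : realType) (V E : finType) (ends : E -> V * V)
  (noloop : forall e, (ends e).1 != (ends e).2)
  (nonnull : (0 < #|V|)%N) :
  (forall r : R, (max_degree ends)%:R / 2 < r -> semi_length ends (@sigma_r V E R r))
  /\ (rho_monoid ends R <=
        ((max_comp_order ends)%:R
         - ((max_comp_order ends)%:R - 1) / (max_degree ends)%:R)%:E)%E
  /\ (simple_graph ends ->
      (rho_monoid ends R <=
        ((max_comp_order ends)%:R - 2 + 2 / (max_comp_order ends)%:R)%:E)%E).
Proof.
set m := max_comp_order ends; set D := max_degree ends.
have Hm1 : (1 <= m)%N.
  case/card_gt0P: nonnull => v0 _.
  apply: leq_trans (@leq_bigmax V (fun v => #|component ends v|) v0).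
  by apply/card_gt0P; exists v0; rewrite inE connect0.
have Hat : forall u, is_atom ends u ->
  [/\ (1 <= #|Wset u|)%N, (#|Wset u| <= m)%N, (#|Wset u| <= #|Fset u| + 1)%N,
      (2 * #|Fset u| <= D * #|Wset u|)%N & ((#|Wset u| <= 1)%N -> #|Fset u| = 0%N)].
  move=> u Hu; split.
  - have [v Hv] := atom_nonempty Hu; apply/card_gt0P; exists v; by rewrite inE.
  - exact: atom_comp noloop u Hu.
  - exact: atom_edges Hu.
  - exact: atom_handshake noloop u Hu.
  - exact: atom_W1 noloop u Hu.
split.
  move=> r Hr; split; [|split; [exact: sigma0|split; [move=> a b _ _; exact: sigma_add|]]].
  - move=> a Ha; have H := handshake noloop Ha.
    have HR : ((2 * \sum_(e : E) a (inr e))%:R <= (D * \sum_(v : V) a (inl v))%:R :> R).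
      by rewrite ler_nat.
    rewrite !natrM !natr_sum in HR.
    have HA : 0 <= \sum_(v : V) (a (inl v))%:R :> R by apply: sumr_ge0.
    rewrite /sigma_r; nra.
  - move=> a Ha; split => [H0|->]; last exact: sigma0.
    have H := handshake noloop Ha.
    have HR : ((2 * \sum_(e : E) a (inr e))%:R <= (D * \sum_(v : V) a (inl v))%:R :> R).
      by rewrite ler_nat.
    rewrite !natrM !natr_sum in HR.
    have HA : 0 <= \sum_(v : V) (a (inl v))%:R :> R by apply: sumr_ge0.
    rewrite /sigma_r in H0.
    have HA0 : \sum_(v : V) (a (inl v))%:R = 0 :> R by nra.
    move: HA0; rewrite -natr_sum => /eqP; rewrite pnatr_eq0 sum_nat_eq0 => /forallP Hv.
    have Hv' : forall v, a (inl v) = 0%N by move=> v; apply/eqP; exact: Hv.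
    apply: funext => -[v|e]; rewrite /azero; first exact: Hv'.
    have := Ha _ e (inc1 e); rewrite Hv'; lia.
split.
  have [D0|Dpos] := eqVneq D 0%N.
    rewrite D0 invr0 mulr0 subr0.
    apply: le_trans (@rho_le R V E ends 1 1 m%:R ltr01 _ _) _.
    - by rewrite ler1n.
    - move=> u Hu; have [H1 H2 H3 H4 H5] := Hat u Hu.
      rewrite (sigma_atom _ Hu) mul1r.
      have -> : #|Fset u| = 0%N by move: H4; rewrite D0; lia.
      by rewrite subr0 ler1n ler_nat H1 H2.
    - by rewrite divr1.
  have HD : (0 < D%:R :> R) by rewrite ltr0n lt0n.
  have HD1 : (1 <= D%:R :> R) by rewrite ler1n lt0n.
  have Hm1R : (1 <= m%:R :> R) by rewrite ler1n.
  apply: le_trans (@rho_le R V E ends D%:R D%:R ((D%:R - 1) * m%:R + 1) HD _ _) _.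
  - have := prod_ge0 HD1 Hm1R; nra.
  - move=> u Hu; have [H1 H2 H3 H4 H5] := Hat u Hu.
    rewrite (sigma_atom _ Hu).
    set w := #|Wset u| in H1 H2 H3 H4 H5 *; set f := #|Fset u| in H3 H4 H5 *.
    have H1R : (1 <= w%:R :> R) by rewrite ler1n.
    have H2R : (w%:R <= m%:R :> R) by rewrite ler_nat.
    have H3R : (w%:R <= f%:R + 1 :> R) by move: H3; rewrite -(ler_nat R) natrD.
    have H4R : (2 * f%:R <= D%:R * w%:R :> R) by move: H4; rewrite -(ler_nat R) !natrM.
    have P1 := prod_ge0 HD1 H2R.
    apply/andP; split; last by nra.
    have [Hw1|Hw2] := leqP w 1.
      have Hw : w = 1%N by lia.
      rewrite Hw (H5 Hw1) subr0 mulr1 //.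
    have Hw2R : (2 <= w%:R :> R) by rewrite ler_nat.
    have := mulr_ge0 (ltW HD) (prod_ge0 Hw2R (lexx 1)); nra.
  - rewrite lee_fin le_eqVlt; apply/orP; left; apply/eqP.
    field; by rewrite lt0r_neq0.
move=> Hsimp.
have HmR : (0 < m%:R :> R) by rewrite ltr0n.
have Hm1R : (1 <= m%:R :> R) by rewrite ler1n.
have Hm12 : 0 <= (m%:R - 1) * (m%:R - 2) :> R.
  have [Hm|Hm] := leqP m 1.
    have -> : m = 1%N by lia.
    by rewrite subrr mul0r.
  have Hm2R : (2%:R <= m%:R :> R) by rewrite ler_nat.
  apply: mulr_ge0; lra.
apply: le_trans (@rho_le R V E ends (m%:R / 2) (m%:R / 2) ((m%:R / 2 - 1) * m%:R + 1) _ _ _) _.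
- by rewrite divr_gt0.
- nra.
- move=> u Hu; have [H1 H2 H3 H4 H5] := Hat u Hu.
  have H6 := simple_edges noloop Hsimp Hu.
  rewrite (sigma_atom _ Hu).
  set w := #|Wset u| in H1 H2 H3 H4 H5 H6 *; set f := #|Fset u| in H3 H4 H5 H6 *.
  have H1R : (1 <= w%:R :> R) by rewrite ler1n.
  have H2R : (w%:R <= m%:R :> R) by rewrite ler_nat.
  have H3R : (w%:R <= f%:R + 1 :> R) by move: H3; rewrite -(ler_nat R) natrD.
  have H6R : (2 * f%:R <= w%:R * (w%:R - 1) :> R).
    have -> : (w%:R - 1 :> R) = (w.-1)%:R by rewrite -subn1 natrB.
    by move: H6; rewrite -(ler_nat R) !natrM.
  have P1 := prod_ge0 H1R H2R.
  have P2 : 0 <= (m%:R - 2) * (m%:R - w%:R) :> R.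
    have [Hm|Hm] := leqP m 1.
      have Hmw : w = m by lia.
      by rewrite Hmw subrr mulr0.
    have Hm2R : (2%:R <= m%:R :> R) by rewrite ler_nat.
    apply: mulr_ge0; lra.
  apply/andP; split; nra.
- rewrite lee_fin le_eqVlt; apply/orP; left; apply/eqP.
  field; by rewrite lt0r_neq0.
Qed.
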